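(* Let $M, K, P, N$ be positive integers with $1 < M \le K \le P$. Then there exists a matrix $\mathbf{A} \in \mathbb{R}^{M \times N}$ such that every matrix $\mathbf{F} \in \mathbb{R}^{P \times N}$ with the property that, for every set $\chi \subseteq \{1,\ldots,P\}$ with $|\chi| = K$, the rows of $\mathbf{F}$ indexed by $\chi$ span all the rows of $\mathbf{A}$, satisfies the following: the number $\lambda$ of columns of $\mathbf{F}$ having more than $K-M$ zero entries satisfies $$\lambda < M\binom{P}{K-M+1}.$$ *)

(* Defs.v *)
From Stdlib Require Import Reals.
From HB Require Import structures.
From mathcomp Require Import all_boot all_order all_algebra.
From mathcomp Require Import Rstruct.
Set Implicit Arguments. Unset Strict Implicit. Unset Printing Implicit Defensive.
Import Order.TTheory GRing.Theory Num.Theory.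
Local Open Scope ring_scope.

Definition rows_span (M P N : nat) (F : 'M[R]_(P, N)) (chi : {set 'I_P})
  (A : 'M[R]_(M, N)) : Prop :=
  (A <= (\sum_(i in chi) <<row i F>>)%MS)%MS.

Definition ncols_many_zeros (P N : nat) (F : 'M[R]_(P, N)) (t : nat) : nat :=
  #|[set j : 'I_N | (t < #|[set i : 'I_P | F i j == 0%R]|)%N ]|.

(* Main.v *)
Require Import Defs.
From Stdlib Require Import Reals.
From HB Require Import structures.
From mathcomp Require Import all_boot all_order all_algebra.
From mathcomp Require Import Rstruct zify.
Set Implicit Arguments. Unset Strict Implicit. Unset Printing Implicit Defensive.
Import Order.TTheory GRing.Theory Num.Theory.
Local Open Scope ring_scope.
Definition vdm (M N : nat) : 'M[R]_(M, N) := \matrix_(i, j) (((j : nat).+1)%:R ^+ i).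

Definition projD (N : nat) (J : {set 'I_N}) : 'M[R]_N :=
  diag_mx (\row_j ((j \in J)%:R)).

Lemma vdm_free (M N : nat) (J : {set 'I_N}) (c : 'rV[R]_M) :
  c *m vdm M N *m projD J = 0 -> (M <= #|J|)%N -> c = 0.
Proof.
move=> hc hJ; apply/matrixP => a i; rewrite mxE ord1.
pose p : {poly R} := \poly_(k < M) c 0 (insubd i k).
have hr : all (root p) [seq ((val j).+1)%:R | j <- enum J].
  apply/allP => x /mapP [j]; rewrite mem_enum => jJ ->.
  apply/rootP; rewrite horner_poly.
  have := congr1 (fun X : 'M[R]_(1,N) => X 0 j) hc.
  rewrite /projD mul_mx_diag !mxE jJ mulr1 => E; apply: (etrans _ E).
  by apply: eq_bigr => k _; rewrite !mxE valKd.
have hu : uniq [seq ((val j).+1)%:R : R | j <- enum J].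
  rewrite map_inj_uniq ?enum_uniq // => j1 j2 /eqP.
  by rewrite eqr_nat eqSS => /eqP /val_inj.
apply/eqP; apply: contraT => hci.
have pn0 : p != 0.
  apply/eqP => /(congr1 (fun q : {poly R} => q`_i)).
  by rewrite coef_poly ltn_ord valKd coef0 => /eqP; rewrite (negPf hci).
have := max_poly_roots pn0 hr hu.
rewrite size_map -cardE => h.
have := leq_trans h (size_poly _ _).
by rewrite ltnNge hJ.
Qed.
Lemma subset_card (T : finType) (A : {set T}) k :
  (k <= #|A|)%N -> exists2 B : {set T}, B \subset A & #|B| = k.
Proof.
elim: k => [|k IH] hk; first by exists set0; rewrite ?sub0set ?cards0.
have [B BA cB] := IH (ltnW hk).
have : (0 < #|A :\: B|)%N by rewrite cardsD (setIidPr BA) subn_gt0 cB.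
case/card_gt0P => x; rewrite inE => /andP [xB xA].
exists (x |: B); first by rewrite subUset sub1set xA BA.
by rewrite cardsU1 xB cB.
Qed.

Lemma card_bigcup_leq (I T : finType) (Q : pred I) (G : I -> {set T}) :
  (#|\bigcup_(i | Q i) G i| <= \sum_(i | Q i) #|G i|)%N.
Proof.
elim/big_rec2: _ => [|i U n _ IH]; first by rewrite cards0.
by rewrite (leq_trans (leq_card_setU _ _)) // leq_add2l.
Qed.

Lemma rank_sum_rows P N (F : 'M[R]_(P, N)) (W : {set 'I_P}) (D : 'M[R]_N) :
  (\rank (\sum_(i in W) <<row i F *m D>>)%MS <= #|W|)%N.
Proof.
rewrite -sum1_card.
apply: (big_ind2 (fun (X : 'M[R]_N) n => \rank X <= n)%N).
- by rewrite mxrank0.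
- move=> x1 n1 x2 n2 h1 h2.
  exact: leq_trans (mxrank_adds_leqif x1 x2) (leq_add h1 h2).
- by move=> i _; rewrite mxrank_gen rank_leq_row.
Qed.

Lemma key M K P N (F : 'M[R]_(P, N)) (Z : {set 'I_P}) :
  (0 < M)%N -> (M <= K)%N -> (K <= P)%N ->
  (forall chi : {set 'I_P}, #|chi| = K -> rows_span F chi (vdm M N)) ->
  #|Z| = (K - M + 1)%N ->
  (#|[set j : 'I_N | [forall i in Z, F i j == 0%R]]| < M)%N.
Proof.
move=> hM hMK hKP hF hZ.
set J := [set j : 'I_N | [forall i in Z, F i j == 0%R]].
have hC : (M - 1 <= #|~: Z|)%N.
  have := cardsC Z; rewrite card_ord hZ; lia.
have [W WZ cW] := subset_card hC.
have cchi : #|Z :|: W| = K.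
  rewrite cardsU.
  have -> : Z :&: W = set0.
    apply/setP => x; rewrite !inE; apply/negbTE; apply/andP => -[xZ xW].
    by move: (subsetP WZ x xW); rewrite inE xZ.
  rewrite cards0 hZ cW; lia.
have hs := hF _ cchi; rewrite /rows_span in hs.
rewrite ltnNge; apply/negP => hJ.
set D := projD J.
set B := vdm M N *m D.
have zD : forall i, i \in Z -> row i F *m D = 0.
  move=> i iZ; apply/rowP => j; rewrite /D /projD mul_mx_diag !mxE.
  case jJ: (j \in J); last by rewrite mulr0.
  by move: jJ; rewrite inE => /forall_inP/(_ i iZ)/eqP ->; rewrite mul0r.
have sB : (B <= \sum_(i in W) <<row i F *m D>>)%MS.
  apply: submx_trans (submxMr D hs) _.
  rewrite sumsmxMr_gen; apply/sumsmx_subP => i; rewrite inE => /orP [iZ|iW];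
    rewrite genmxE (eqmxMr D (genmxE (row i F))).
    by rewrite zD // sub0mx.
  by apply: (sumsmx_sup i) => //; rewrite genmxE.
have rB : (\rank B < M)%N.
  apply: leq_ltn_trans (mxrankS sB) _.
  apply: leq_ltn_trans (rank_sum_rows _ _ _) _; rewrite cW; lia.
have : kermx B != 0.
  by rewrite -mxrank_eq0 mxrank_ker -lt0n subn_gt0.
apply/negP; rewrite negbK; apply/eqP/row_matrixP => k; rewrite row0.
apply: (vdm_free (J := J)) => //.
by rewrite -mulmxA -/D -/B -row_mul mulmx_ker row0.
Qed.
Local Close Scope ring_scope.
Theorem lemma3 (M K P N : nat) (hM : (0 < M)%N) (hK : (0 < K)%N)
  (hP : (0 < P)%N) (hN : (0 < N)%N)
  (h1M : (1 < M)%N) (hMK : (M <= K)%N) (hKP : (K <= P)%N) :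
  exists A : 'M[R]_(M, N),
    forall F : 'M[R]_(P, N),
      (forall chi : {set 'I_P}, #|chi| = K -> rows_span F chi A) ->
      (ncols_many_zeros F (K - M) < M * 'C(P, K - M + 1))%N.
Proof.
exists (vdm M N) => F hF.
set T := (K - M + 1)%N.
pose Jz (Z : {set 'I_P}) := [set j : 'I_N | [forall i in Z, F i j == 0%R]].
have sub : [set j : 'I_N | (K - M < #|[set i : 'I_P | F i j == 0%R]|)%N]
   \subset \bigcup_(Z in [set Z : {set 'I_P} | #|Z| == T]) Jz Z.
  apply/subsetP => j; rewrite inE => hj.
  have hj' : (T <= #|[set i : 'I_P | F i j == 0%R]|)%N by rewrite /T addn1.
  have [Z Zs cZ] := subset_card hj'.
  apply/bigcupP; exists Z; first by rewrite inE cZ.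
  rewrite inE; apply/forall_inP => i iZ.
  by have := subsetP Zs i iZ; rewrite inE.
rewrite /ncols_many_zeros.
apply: leq_ltn_trans (subset_leq_card sub) _.
apply: leq_ltn_trans (card_bigcup_leq _ _) _.
apply: (@leq_ltn_trans (\sum_(Z in [set Z : {set 'I_P} | #|Z| == T]) (M - 1))%N).
  apply: leq_sum => Z; rewrite inE => /eqP cZ.
  have := key (F := F) (Z := Z) hM hMK hKP hF cZ; rewrite /Jz; lia.
rewrite sum_nat_const card_draws card_ord.
have : (0 < 'C(P, T))%N by rewrite bin_gt0 /T; lia.
nia.
Qed.
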